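(* Let $\gamma>1$ and $a>0$, and set $v_{1,1}=a$, $v_{2,1}=\gamma a$. Then there exist $b>0$ and $\vartheta\in(-\pi,\pi]$ such that, with $w_{1,1}=w_{2,1}=b$, one has $2\omega_-(\vartheta)=\omega_+(2\vartheta)$.
   Context: With $c_i:=2v_{i,1}+w_{i,1}$, for $\vartheta\in\mathbb R$ define $$\omega_\pm(\vartheta):=\sqrt{\tfrac12\Big(c_1+c_2\pm\sqrt{(c_1-c_2)^2+8v_{1,1}v_{2,1}(\cos\vartheta+1)}\Big)}.$$ (In the stated setting $w_{i,1}>0$, $4v_{i,1}+w_{i,1}>0$, $v_{1,1}v_{2,1}>0$, $c_2>c_1$, so both branches are positive.) *)

(* Defs.v *)
From Stdlib Require Import Reals.
Open Scope R_scope.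

Definition cc (v w : R) : R := 2 * v + w.

Definition omega_plus (v11 v21 w11 w21 theta : R) : R :=
  let c1 := cc v11 w11 in let c2 := cc v21 w21 in
  sqrt (/ 2 * (c1 + c2 + sqrt ((c1 - c2) ^ 2 + 8 * v11 * v21 * (cos theta + 1)))).

Definition omega_minus (v11 v21 w11 w21 theta : R) : R :=
  let c1 := cc v11 w11 in let c2 := cc v21 w21 in
  sqrt (/ 2 * (c1 + c2 - sqrt ((c1 - c2) ^ 2 + 8 * v11 * v21 * (cos theta + 1)))).

(* Main.v *)
Require Import Defs.
From Stdlib Require Import Reals Lra.
Open Scope R_scope.

Theorem mainTheorem2 (gamma a : R) (hgamma : 1 < gamma) (ha : 0 < a) :
  exists b theta : R,
    0 < b /\ - PI < theta <= PI /\
    2 * omega_minus a (gamma * a) b b theta =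
      omega_plus a (gamma * a) b b (2 * theta).
Proof.
  exists (2 * a * (gamma + 1) / 3), 0.
  pose proof PI_RGT_0.
  split; [nra|]. split; [lra|].
  unfold omega_minus, omega_plus, cc.
  replace (2 * 0) with 0 by ring. rewrite cos_0.
  set (b := 2 * a * (gamma + 1) / 3).
  assert (HD : sqrt ((2 * a + b - (2 * (gamma * a) + b)) ^ 2 + 8 * a * (gamma * a) * (1 + 1))
               = 2 * a * (gamma + 1)).
  { replace ((2 * a + b - (2 * (gamma * a) + b)) ^ 2 + 8 * a * (gamma * a) * (1 + 1))
      with ((2 * a * (gamma + 1)) ^ 2) by ring.
    apply sqrt_pow2. nra. }
  rewrite HD.
  replace (/ 2 * (2 * a + b + (2 * (gamma * a) + b) - 2 * a * (gamma + 1)))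
    with (2/3 * a * (gamma + 1)) by (unfold b; field).
  replace (/ 2 * (2 * a + b + (2 * (gamma * a) + b) + 2 * a * (gamma + 1)))
    with (4 * (2/3 * a * (gamma + 1))) by (unfold b; field).
  rewrite (sqrt_mult 4 (2/3 * a * (gamma + 1))); [| lra | nra].
  assert (H4 : sqrt 4 = 2) by (replace 4 with (2 ^ 2) by ring; apply sqrt_pow2; lra).
  rewrite H4. ring.
Qed.
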